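(* Let $w\in\Sigma^*$ and let $u$ be a scattered factor of $w$. Then $C(w,u)=\{u\}$ if and only if $w$ is the perfect shuffle of $u$ with itself, i.e., $w=u[1]u[1]u[2]u[2]\cdots u[|u|]u[|u|]$.
   Context: An embedding of $u$ in $w$ is a map $e:\{1,\dots,|u|\}\to\{1,\dots,|w|\}$ with $e(1)<\dots<e(|u|)$ and $u[i]=w[e(i)]$. The shuffle $\mathrm{Sh}(u,v)$ is the set of words of length $|u|+|v|$ admitting an embedding of $u$ and one of $v$ with disjoint images covering all positions, and $C(w,u)=\{v\in\Sigma^{|w|-|u|}: w\in\mathrm{Sh}(u,v)\}$. For words $u,v$ of equal length $m$, the perfect shuffle is $u[1]v[1]u[2]v[2]\cdots u[m]v[m]$. *)

(* Defs.v *)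
From mathcomp Require Import all_boot.
Set Implicit Arguments. Unset Strict Implicit. Unset Printing Implicit Defensive.

Section Words.
Variable Sigma : eqType.

Definition embedding (u w : seq Sigma) (e : 'I_(size u) -> 'I_(size w)) : Prop :=
  (forall i j : 'I_(size u), i < j -> e i < e j) /\
  (forall i : 'I_(size u), tnth (in_tuple u) i = tnth (in_tuple w) (e i)).

Definition scattered_factor (u w : seq Sigma) : Prop :=
  exists e, @embedding u w e.

Definition in_shuffle (u v w : seq Sigma) : Prop :=
  size w = size u + size v /\
  exists (e1 : 'I_(size u) -> 'I_(size w)) (e2 : 'I_(size v) -> 'I_(size w)),
    [/\ embedding e1, embedding e2,
        (forall i j, e1 i <> e2 j) &
        (forall k, (exists i, e1 i = k) \/ (exists j, e2 j = k))].

Definition Cset (w u : seq Sigma) (v : seq Sigma) : Prop :=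
  size v = size w - size u /\ in_shuffle u v w.

Definition perfect_shuffle (u v : seq Sigma) : seq Sigma :=
  flatten [seq [:: p.1; p.2] | p <- zip u v].

End Words.

(* Main.v *)
Require Import Defs.
From mathcomp Require Import all_boot zify.
Set Implicit Arguments. Unset Strict Implicit. Unset Printing Implicit Defensive.

Lemma mem_mask_iota (m : bitseq) (a k : nat) :
  (k \in mask m (iota a (size m))) = (a <= k < a + size m) && nth false m (k - a).
Proof.
elim: m a => [|b m IH] a /=; first by rewrite addn0; case: (leqP a k) => //= /ltnW ->.
case: (ltngtP k a) => [Hlt|Hgt|Heq].
  have E : (a.+1 <= k) = false by lia.
  by case: b; rewrite ?inE IH ?(ltn_eqF Hlt) E.
- have E1 : (a <= k) by lia.
  have E2 : (a.+1 <= k) by lia.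
  have E3 : k - a = (k - a.+1).+1 by lia.
  case: b; rewrite ?inE IH ?(gtn_eqF Hgt) E2 E3 /= addSnnS //.
- subst k; rewrite addnS ltnS leq_addr subnn /=.
  have E : (a.+1 <= a) = false by lia.
  by case: b; rewrite ?inE ?eqxx //= IH E.
Qed.

Lemma mem_mask_iota0 (m : bitseq) (k : nat) :
  (k \in mask m (iota 0 (size m))) = (k < size m) && nth false m k.
Proof. by rewrite mem_mask_iota subn0. Qed.

Section Br.
Variable T : eqType.

Lemma mask_nth_iota (x0 : T) m w :
  mask m w = map (nth x0 w) (mask m (iota 0 (size w))).
Proof. by rewrite map_mask map_nth_iota0 // take_size. Qed.

Lemma mask_emb (x w : seq T) (m : bitseq) :
  size m = size w -> mask m w = x ->
  exists e : 'I_(size x) -> 'I_(size w),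
    [/\ embedding e,
        (forall i, val (e i) \in mask m (iota 0 (size w))) &
        (forall k : 'I_(size w), nth false m k -> exists i, e i = k)].
Proof.
move=> Hm Hx.
set s := mask m (iota 0 (size w)).
have Hss : size s = size x by rewrite -Hx !size_mask // size_iota.
have Hlt : forall i : 'I_(size x), nth 0 s i < size w.
  move=> i; have : nth 0 s i \in s by rewrite mem_nth // Hss.
  by move/mem_mask; rewrite mem_iota.
have Hsort : sorted ltn s by apply: sorted_mask; [exact: ltn_trans | exact: iota_ltn_sorted].
exists (fun i => Ordinal (Hlt i)); split.
- split.
  + move=> i j Hij /=.
    apply: (sorted_ltn_nth ltn_trans 0 Hsort) => //; by rewrite inE Hss.
  + move=> i; have x0 : T := tnth (in_tuple x) i.
    rewrite !(tnth_nth x0) /=.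
    have -> : nth x0 x i = nth x0 (mask m w) i by rewrite Hx.
    by rewrite (mask_nth_iota x0) (nth_map 0) // Hss.
- by move=> i /=; rewrite mem_nth // Hss.
- move=> k Hk.
  have Hks : (val k \in s).
    by have := mem_mask_iota0 m (val k); rewrite Hm ltn_ord Hk.
  have Hi : index (val k) s < size x by rewrite -Hss index_mem.
  exists (Ordinal Hi); apply: val_inj => /=; exact: nth_index.
Qed.


Lemma mem_mask_iotaw (m : bitseq) (w : seq T) (k : nat) : size m = size w ->
  (k \in mask m (iota 0 (size w))) = (k < size w) && nth false m k.
Proof. by move=> Hm; rewrite -Hm mem_mask_iota0. Qed.

Lemma mask_in_shuffle (m : bitseq) (w : seq T) : size m = size w ->
  in_shuffle (mask m w) (mask (map negb m) w) w.
Proof.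
move=> Hm; have Hm' : size (map negb m) = size w by rewrite size_map.
split.
  rewrite !size_mask // count_map -Hm -(count_predC id m); congr (_ + _).
have [e1 [He1 Hi1 Hc1]] := mask_emb Hm erefl.
have [e2 [He2 Hi2 Hc2]] := mask_emb Hm' erefl.
exists e1, e2; split => //.
- move=> i j E.
  have := Hi1 i; have := Hi2 j; rewrite -E !mem_mask_iotaw // (nth_map false); last by rewrite Hm ltn_ord.
  by case: (nth false m _); rewrite /= ?andbF ?andbT.
- move=> k; case E: (nth false m k).
    by left; apply: Hc1; rewrite E.
  by right; apply: Hc2; rewrite (nth_map false) ?E // Hm.
Qed.

Lemma emb_mask (x w : seq T) (e : 'I_(size x) -> 'I_(size w)) (m : bitseq) :
  embedding e -> size m = size w ->
  (forall k, k < size w -> nth false m k = (k \in [seq val (e i) | i <- enum 'I_(size x)])) ->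
  mask m w = x.
Proof.
move=> [Hmono Hlet] Hm Hnth.
case: w e Hlet Hmono Hm Hnth => [|x0 w'] e Hlet Hmono Hm Hnth.
  case: x e Hlet Hmono Hnth => [|a x'] e Hlet Hmono Hnth; first by clear Hnth; move: Hm; case: m.
  by case: (e ord0).
set w := x0 :: w' in e Hlet Hmono Hm Hnth *.
set s := [seq val (e i) | i <- enum 'I_(size x)].
have Hs : sorted ltn s.
  rewrite /s sorted_map.
  apply: (@sub_sorted _ (relpre val ltn)); first by move=> i j /= /Hmono.
  by rewrite -sorted_map val_enum_ord iota_ltn_sorted.
have Hsw : forall k, k \in s -> k < size w.
  by move=> k /mapP [i _ ->]; exact: ltn_ord.
have Eq : mask m (iota 0 (size w)) = s.
  apply: (irr_sorted_eq ltn_trans ltnn) => //.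
    by apply: sorted_mask; [exact: ltn_trans | exact: iota_ltn_sorted].
  move=> k; rewrite mem_mask_iotaw //.
  case: (ltnP k (size w)) => Hk /=; first by rewrite Hnth.
  by apply/esym/negbTE; apply/negP => /Hsw; rewrite ltnNge Hk.
rewrite (mask_nth_iota x0) Eq /s -map_comp.
transitivity [seq nth x0 x j | j <- iota 0 (size x)]; last by rewrite map_nth_iota0 // take_size.
rewrite -val_enum_ord -map_comp.
apply: eq_map => i /=.
by have := Hlet i; rewrite !(tnth_nth x0) => <-.
Qed.

End Br.
Section S.
Variable T : eqType.

Inductive shuf : seq T -> seq T -> seq T -> Prop :=
| sh0 : shuf [::] [::] [::]
| shL a u v w : shuf u v w -> shuf (a::u) v (a::w)
| shR a u v w : shuf u v w -> shuf u (a::v) (a::w).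

Lemma shuf_nil u v : shuf u v [::] -> u = [::] /\ v = [::].
Proof. by move=> H; inversion H. Qed.

Lemma shuf_cons u v a w : shuf u v (a::w) ->
  (exists u', u = a::u' /\ shuf u' v w) \/ (exists v', v = a::v' /\ shuf u v' w).
Proof. move=> H; inversion H; subst; [left|right]; eauto. Qed.

Lemma shuf_size u v w : shuf u v w -> size w = size u + size v.
Proof. by elim=> //= *; rewrite ?addSn ?addnS; congr S. Qed.

Lemma shuf_sym u v w : shuf u v w -> shuf v u w.
Proof. by elim=> *; constructor. Qed.

Lemma shuf_subseq u v w : shuf u v w -> subseq u w.
Proof.
elim=> //= a u' v' w' _ IH; first by rewrite eqxx.
exact: subseq_trans IH (subseq_cons _ _).
Qed.

Lemma shuf_mask u v w : shuf u v w ->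
  exists m, [/\ size m = size w, mask m w = u & mask (map negb m) w = v].
Proof.
elim; first by exists [::].
- move=> a u' v' w' _ [m [H1 H2 H3]]; exists (true::m); by rewrite /= H1 H2 H3.
- move=> a u' v' w' _ [m [H1 H2 H3]]; exists (false::m); by rewrite /= H1 H2 H3.
Qed.

Lemma mask_shuf m w : size m = size w -> shuf (mask m w) (mask (map negb m) w) w.
Proof.
elim: w m => [|a w IH] [|b m] //=; first by constructor.
by move=> [] /IH; case: b => /= H; constructor.
Qed.

Lemma subseq_shuf u w : subseq u w -> exists v, shuf u v w.
Proof. by case/subseqP=> m Hm ->; eexists; apply: mask_shuf. Qed.

Definition ps (u : seq T) := perfect_shuffle u u.

Lemma ps_cons a u : ps (a::u) = a :: a :: ps u.
Proof. by []. Qed.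

Lemma ps_shuf u : shuf u u (ps u).
Proof. elim: u => [|a u IH]; first by constructor. by rewrite ps_cons; do 2 constructor. Qed.

Definition allb (b : T) (y : seq T) := forall a, a \in y -> a = b.

Lemma allb_comm b y s : allb b y -> y ++ b :: s = b :: y ++ s.
Proof.
elim: y => //= c y IH H.
rewrite (H c (mem_head _ _)) IH // => a Ha; apply: H; by rewrite in_cons Ha orbT.
Qed.

Lemma allb_cons b c y : allb b (c::y) <-> c = b /\ allb b y.
Proof.
split.
- move=> H; split; first exact: H (mem_head _ _).
  by move=> a Ha; apply: H; rewrite in_cons Ha orbT.
- move=> [-> H] a; rewrite in_cons => /orP [/eqP -> //|]; exact: H.
Qed.

Lemma allb_cat b y z : allb b (y ++ z) <-> allb b y /\ allb b z.
Proof.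
split.
- by move=> H; split=> a Ha; apply: H; rewrite mem_cat Ha ?orbT.
- by move=> [H1 H2] a; rewrite mem_cat => /orP [/H1|/H2].
Qed.

Lemma allb1 b : allb b [:: b].
Proof. by move=> a; rewrite inE => /eqP. Qed.

Definition cst (y : seq T) := forall a c, a \in y -> c \in y -> a = c.

Lemma cst_allb b y : allb b y -> cst y.
Proof. by move=> H a c /H -> /H ->. Qed.

Lemma cst_rcons_allb b y : cst (y ++ [:: b]) -> allb b y.
Proof. by move=> H a Ha; apply: H; rewrite mem_cat ?Ha ?inE ?eqxx ?orbT. Qed.

Lemma Qboth x :
  (forall y q, shuf (y ++ x) q (ps x) -> x = y ++ q /\ cst y) /\
  (forall y z q, x = y ++ z -> cst y -> shuf z q (ps x) -> q = y ++ x).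
Proof.
elim: x => [|b x [IHm IHp]].
  split.
  - move=> y q; rewrite cats0 => /shuf_nil [-> ->]; split => // a c.
  - by move=> [|??] [|??] q // _ _ /shuf_nil [_ ->].
have Qm : forall y q, shuf (y ++ b :: x) q (ps (b :: x)) -> b :: x = y ++ q /\ cst y.
  move=> [|c y] q; rewrite ps_cons.
  - rewrite cat0s => /shuf_cons [[p1 [[<-] /shuf_cons [[p2 [Ex H]]|[q1 [-> H]]]]]|[q1 [-> /shuf_cons [[p1 [[<-] H]]|[q2 [-> H]]]]]].
    + by split => //; rewrite (IHp [:: b] p2 q) //= ?Ex // => a1 c1; rewrite !inE => /eqP -> /eqP ->.
    + by split => //; rewrite (IHm [::] q1 H).1.
    + by split => //; rewrite (IHm [::] q1 H).1.
    + have [E _] := IHm [:: b] q2 H. by rewrite E.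
  - rewrite cat_cons => /shuf_cons [[p1 [[Ecb Ep1] /shuf_cons [[p2 [Ep2 H]]|[q1 [Eq H]]]]]|[q1 [Eq /shuf_cons [[p1 [[Ecb Ep1] H]]|[q2 [Eq2 H]]]]]]; subst.
    + case: y Ep2 H => [|d y] /=.
      * case=> <- H; have [E _] := IHm [::] q H; subst; split => //.
        exact: (cst_allb (@allb1 b)).
      * case=> -> Ep2 H; subst.
        have [E /cst_rcons_allb Hb] := IHm (y ++ [:: b]) q ltac:(by rewrite -catA).
        subst; rewrite -catA /= allb_comm //; split => //.
        by apply: (@cst_allb b); do 2 (apply/allb_cons; split => //).
    + have [E /cst_rcons_allb Hb] := IHm (y ++ [:: b]) q1 ltac:(by rewrite -catA).
      subst; rewrite -catA /=; split => //.
      by apply: (@cst_allb b); apply/allb_cons.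
    + have [E /cst_rcons_allb Hb] := IHm (y ++ [:: b]) q1 ltac:(by rewrite -catA).
      subst; rewrite -catA /=; split => //.
      by apply: (@cst_allb b); apply/allb_cons.
    + have [E /(@cst_rcons_allb b (c::y)) /allb_cons [Ecb Hb]] := IHm (c :: y ++ [:: b]) q2 ltac:(by rewrite /= -catA).
      subst; rewrite /= -catA /= !allb_comm //; split => //.
      by apply: (@cst_allb b); apply/allb_cons.
split => //.
move=> [|c y] z q.
- by move=> /= <- _ /(Qm [::]) [-> _].
- case=> Ecb Ex Hc; subst c.
  have Hb : allb b y by move=> a Ha; apply: Hc; rewrite ?inE ?Ha ?orbT ?eqxx.
  have Hcst : forall t, allb b t -> cst t by move=> t Ht; apply: cst_allb Ht.
  rewrite ps_cons => /shuf_cons [[p1 [Ez /shuf_cons [[z2 [Ep1 H]]|[q1 [Eq H]]]]]|[q1 [Eq /shuf_cons [[z1 [Ez H]]|[q2 [Eq2 H]]]]]]; subst.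
  + have -> := IHp (y ++ [:: b; b]) z2 q ltac:(by rewrite -catA) (Hcst (y ++ [:: b; b]) ltac:(by apply/allb_cat; split => //; do 2 (apply/allb_cons; split => //))) H.
    by rewrite -catA /= allb_comm.
  + have -> := IHp (y ++ [:: b]) p1 q1 ltac:(by rewrite -catA) (Hcst (y ++ [:: b]) ltac:(by apply/allb_cat; split => //; apply/allb_cons)) H.
    by rewrite -catA.
  + have -> := IHp (y ++ [:: b]) z1 q1 ltac:(by rewrite -catA) (Hcst (y ++ [:: b]) ltac:(by apply/allb_cat; split => //; apply/allb_cons)) H.
    by rewrite -catA.
  + have -> := IHp y z q2 erefl (Hcst _ Hb) H.
    by rewrite /= allb_comm.
Qed.


Lemma shuf_nil_l w : shuf [::] w w.
Proof. by elim: w => [|a w IH]; constructor. Qed.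

Definition CS (w u v : seq T) := size v = size w - size u /\ shuf u v w.

Lemma ps_unique u v : shuf u v (ps u) -> v = u.
Proof. by move=> H; have [-> _] := (Qboth u).1 [::] v H. Qed.

Lemma size_ps u : size (ps u) = size u + size u.
Proof. by have := shuf_size (ps_shuf u). Qed.

Lemma main_abs w u : (forall v, CS w u v <-> v = u) <-> w = ps u.
Proof.
split; last first.
  move=> ->{w} v; split; first by move=> [_ /ps_unique].
  by move=> ->; split; [rewrite size_ps addnK | apply: ps_shuf].
elim: u w => [|a u IH] w H.
  by have := (H w).1 (conj (esym (subn0 _)) (shuf_nil_l w)).
have [Hs Hsh] := (H (a :: u)).2 erefl.
have Hsz := shuf_size Hsh.
case: w H Hs Hsh Hsz => [|c w1] H Hs Hsh Hsz; first by [].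
have [Eca Hw1] : c = a /\ shuf u (a :: u) w1.
  case/shuf_cons: Hsh => [[u' [[<- <-] H']]|[u' [[<- <-] H']]]; split => //.
  exact: shuf_sym.
subst c.
have H1 : forall v, CS w1 u v -> v = a :: u.
  move=> v [Hv Hvs]; apply/(H v).1; split; last by constructor.
  by rewrite Hv /= subSS.
case: w1 Hw1 H1 Hsz H {Hs Hsh} => [|d w2] Hw1 H1 Hsz H; first by case/shuf_nil: Hw1.
have Hsub : subseq u w2.
  case/shuf_cons: Hw1 => [[u' [Eu H']]|[u' [[_ <-] H']]].
    apply: subseq_trans (shuf_subseq (shuf_sym H')).
    exact: subseq_cons.
  exact: shuf_subseq H'.
have Hda : d = a.
  have [v2 Hv2] := subseq_shuf Hsub.
  have : d :: v2 = a :: u.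
    apply: H1; split; last by constructor.
    by rewrite /= (shuf_size Hv2) subSn ?leq_addr // addKn.
  by case.
subst d.
have H2a : forall v, CS w2 u v -> v = u.
  move=> v [Hv Hvs].
  have : a :: v = a :: u.
    apply/(H (a :: v)); split; last by do 2 constructor.
    by rewrite /= subSS Hv subSn // size_subseq.
  by case.
have H2 : forall v, CS w2 u v <-> v = u.
  move=> v; split; first exact: H2a.
  move=> ->.
  have [v2 Hv2] := subseq_shuf Hsub.
  have Hc : CS w2 u v2.
    by rewrite /CS (shuf_size Hv2) addKn.
  by have E := H2a _ Hc; move: Hc; rewrite E.
by rewrite (IH w2 H2).
Qed.

End S.

Section Fin.
Variable T : eqType.

Lemma in_shuffle_shuf (u v w : seq T) : in_shuffle u v w <-> shuf u v w.
Proof.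
split; last first.
  case/shuf_mask => m [Hm <- <-]; exact: mask_in_shuffle.
move=> [_ [e1 [e2 [He1 He2 Hd Hc]]]].
set s1 := [seq val (e1 i) | i <- enum 'I_(size u)].
set s2 := [seq val (e2 i) | i <- enum 'I_(size v)].
set m := [seq k \in s1 | k <- iota 0 (size w)].
have Hm : size m = size w by rewrite size_map size_iota.
have Hn : forall k, k < size w -> nth false m k = (k \in s1).
  by move=> k Hk; rewrite (nth_map 0) ?size_iota // nth_iota.
have Hu : mask m w = u by apply: (emb_mask He1 Hm).
have Hv : mask (map negb m) w = v.
  apply: (emb_mask He2); first by rewrite size_map.
  move=> k Hk; rewrite (nth_map false) ?Hm // Hn //.
  set kk : 'I_(size w) := Ordinal Hk.
  have E1 : (k \in s1) = [exists i, e1 i == kk].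
    apply/mapP/existsP => [[i _ Ei]|[i /eqP Ei]].
      by exists i; apply/eqP/val_inj; rewrite /= Ei.
    by exists i; rewrite ?mem_enum // Ei.
  have E2 : (k \in s2) = [exists j, e2 j == kk].
    apply/mapP/existsP => [[i _ Ei]|[i /eqP Ei]].
      by exists i; apply/eqP/val_inj; rewrite /= Ei.
    by exists i; rewrite ?mem_enum // Ei.
  rewrite E1 E2.
  case: (Hc kk) => [[i Ei]|[j Ej]].
    have -> : [exists i, e1 i == kk] by apply/existsP; exists i; apply/eqP.
    apply/esym/negbTE/existsP => [[j /eqP Ej]].
    by apply: (Hd i j); rewrite Ei Ej.
  have -> : [exists j, e2 j == kk] by apply/existsP; exists j; apply/eqP.
  apply/negbT/negbTE/existsP => [[i /eqP Ei]].
  by apply: (Hd i j); rewrite Ei Ej.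
by rewrite -Hu -Hv; apply: mask_shuf.
Qed.

Lemma Cset_CS (w u v : seq T) : Cset w u v <-> CS w u v.
Proof.
rewrite /Cset /CS; split => [[H1 H2]|[H1 H2]]; split => //; exact/in_shuffle_shuf.
Qed.

End Fin.

Unset Implicit Arguments.
Theorem theorem36 (Sigma : eqType) (w u : seq Sigma) :
  scattered_factor u w ->
  ((forall v : seq Sigma, Cset w u v <-> v = u) <-> w = perfect_shuffle u u).
Proof.
move=> _.
have E : (forall v, Cset w u v <-> v = u) <-> (forall v, CS w u v <-> v = u).
  split => H v; split => Hv.
  - by apply/H/Cset_CS.
  - by apply/Cset_CS/H.
  - by apply/H/Cset_CS.
  - by apply/Cset_CS/H.
split => [/E /main_abs //|Hw]; apply/E/main_abs; exact: Hw.
Qed.
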